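(* Assume no direct effect, consistency, no interference, static features, the MAR assumption $\pi_\beta(R\mid X_{(1)})=\pi_\beta(R\mid X_o)$, and the semi-offline positivity assumption: for all $\underline x'^{T-1},\underline a'^T,x_o$, if $\prod_{t=1}^T\pi_\alpha(a'^t\mid\underline x'^{t-1},\underline a'^{t-1})\prod_{t=0}^{T-1}p'(x'^t\mid\underline x'^{t-1},a'^t,x_o)\,p(x_o)>0$ then $\pi_\beta(R\ge r'\mid x_o)>0$, where $r'$ is the indicator vector of the features acquired in $\underline a'^T$. Then $$J=\mathbb{E}_{p'}[C'_{(\pi_\alpha)}]=\sum_{C',Y,X',A',R,X_o}C'\,g(C'\mid \underline X'^{T-1},\underline A'^T,Y)\,p'(Y\mid\underline X'^{T-1},\underline A'^T,X_o)\,q'(\underline X'^{T-1},\underline A'^T,R,X_o),$$ with $$q'(\underline X'^{T-1},\underline A'^T,R,X_o)=\pi_\beta(R\mid R\ge R',X_o)\prod_{t=1}^T\pi_\alpha(A'^t\mid\underline X'^{t-1},\underline A'^{t-1})\prod_{t=0}^{T-1}p'(X'^t\mid\underline X'^{t-1},A'^t,X_o)\,p(X_o),$$ so $J$ is identified from the observed data distribution.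
   Context: Setting: full feature vector $X_{(1)}\in\mathbb{R}^{d_x}$ (finitely valued), label $Y$, missingness indicators $R\in\{0,1\}^{d_x}$ with mechanism $\pi_\beta(R\mid X_{(1)})$, observed features $X_i=X_{(1),i}$ if $R_i=1$ and ''?'' otherwise. $X_o$ is a fixed subset of coordinates that is always observed in the retrospective data ($R_i=1$ a.s. for those coordinates). An AFA policy $\pi_\alpha(A^t\mid\underline X^{t-1},\underline A^{t-1})$ chooses $A^t\in\{1,\dots,d_x+1\}$ ($i\le d_x$ reveals $X_{(1),i}$; $d_x+1$ stops at step $T$), starting from free features $X^0$; $\underline X^t=(X^0,\dots,X^t)$, $\underline A^t=(A^1,\dots,A^t)$. Deterministic classifier and misclassification cost give $g(C'\mid\underline X'^{T-1},\underline A'^T,Y)$; $J=\mathbb{E}[C_{(\pi_\alpha)}]$. Blocked policy and semi-offline sampling distribution: a blocked version $\pi'_{sim}(A'^t\mid\underline X'^{t-1},\underline A'^{t-1},R)$ of a simulation policy $\pi_{sim}$ assigns probability $0$ to acquiring any feature $i$ with $R_i=0$, and positive probability to every action that $\pi_{sim}$ gives positive probability and that is either stopping or acquiring an available feature; $p'$ is the joint distribution of $(X_{(1)},Y,R)\sim p$ together with simulated features $X'^t=X_{(1),A'^t}$, actions $A'^t\sim\pi'_{sim}$ and cost $C'$; $\pi_{sim}$ satisfies off-policy positivity with respect to $\pi_\alpha$. $C'_{(\pi_\alpha)}$ denotes the potential outcome of $C'$ had $\pi_\alpha$ replaced $\pi'_{sim}$. $R'^t$ denotes the indicator vector of the features acquired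 by $\underline A'^t$, $R'=R'^T$, and $r\ge r'$ means $r_i\ge r'_i$ for all $i$. Note $p'(X'^t\mid\underline X'^{t-1},A'^t,X_o)=p(X_{(1),a'^t}\mid X_{(1),r'^{t-1}},X_o)$. *)

(* Defs.v *)
From HB Require Import structures.
From mathcomp Require Import all_boot all_order all_algebra.
Set Implicit Arguments. Unset Strict Implicit. Unset Printing Implicit Defensive.
Import Order.TTheory GRing.Theory Num.Theory.
Local Open Scope ring_scope.

(* Conventions:
   - features are indexed by 'I_dx and take values in a common finite type V;
   - full feature vector  x : {ffun 'I_dx -> V};
   - a partially observed vector / sub-vector is  {ffun 'I_dx -> option V};
   - missingness indicator  r : {ffun 'I_dx -> bool};
   - action  a : option 'I_dx  (Some i = acquire feature i, None = stop);
   - history of acquisitions  h : seq ('I_dx * V)  (feature, value), i.e.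
     (A'^1,X'^1),...,(A'^{t},X'^{t}); the free features X'^0 are a
     separate argument x0 : {ffun 'I_dx -> option V};
   - division by 0 is 0 (MathComp convention) for conditionals. *)

Section AFA.
Variables (R : realFieldType) (V Ylab Cst : finType) (dx : nat).

Definition fvec := {ffun 'I_dx -> V}.
Definition pvec := {ffun 'I_dx -> option V}.
Definition rvec := {ffun 'I_dx -> bool}.
Definition hist := seq ('I_dx * V).
Definition act := option 'I_dx.

Definition restr (S : {set 'I_dx}) (x : fvec) : pvec :=
  [ffun i => if i \in S then Some (x i) else None].

Definition consistent (x : fvec) (h : hist) : bool :=
  all (fun av => x av.1 == av.2) h.

Definition acquired (h : hist) : rvec := [ffun i => i \in map fst h].

Definition geR (r r' : rvec) : bool := [forall i, r' i ==> r i].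

Definition polprod (pi : pvec -> hist -> act -> R) (x0 : pvec) (h : hist) : R :=
  \prod_(t < size h) pi x0 (take t h) (Some (tnth (in_tuple h) t).1).

Definition trajprob (pi : pvec -> hist -> act -> R) (x0 : pvec) (h : hist) : R :=
  polprod pi x0 h * pi x0 h None.

Variables (N : nat) (o F0 : {set 'I_dx}).
Variables (p : fvec -> Ylab -> R)
          (piB : rvec -> fvec -> R)
          (piA : pvec -> hist -> act -> R)
          (piSb : pvec -> hist -> rvec -> act -> R) (* blocked pi'_sim *)
          (g : pvec -> hist -> Ylab -> Cst -> R)
          (cv : Cst -> R).                           (* numerical value of a cost *)

Definition expcost (x0 : pvec) (h : hist) (y : Ylab) : R :=
  \sum_(c : Cst) cv c * g x0 h y c.

(* inner expectation over trajectories of pi_alpha acting on the full vector x,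
   trajectories of length at most N (the horizon) *)
Definition trajcost (x : fvec) (y : Ylab) : R :=
  \sum_(n < N.+1) \sum_(h : n.-tuple ('I_dx * V) | consistent x h)
     trajprob piA (restr F0 x) h * expcost (restr F0 x) h y.

Definition Jval : R := \sum_(x : fvec) \sum_(y : Ylab) p x y * trajcost x y.

(* E_{p'}[C'_(pi_alpha)] : (X_(1),Y,R) ~ p', pi_alpha replacing pi'_sim,
   features simulated as X'^t = X_(1),A'^t (static features, consistency) *)
Definition Epo : R :=
  \sum_(x : fvec) \sum_(y : Ylab) \sum_(r : rvec) p x y * piB r x * trajcost x y.

(* p'(X'^0 = x0, (A'^t,X'^t)_{t<=|h|} = h, X_o = xo) *)
Definition Ppre (x0 : pvec) (h : hist) (xo : pvec) : R :=
  \sum_(x : fvec) \sum_(y : Ylab) \sum_(r : rvec)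
    p x y * piB r x * (restr F0 x == x0)%:R * (restr o x == xo)%:R
      * (consistent x h)%:R * \prod_(t < size h)
          piSb x0 (take t h) r (Some (tnth (in_tuple h) t).1).

(* p'(Y = y, X'^0 = x0, history h, A'^T = stop, X_o = xo) *)
Definition PpreY (y : Ylab) (x0 : pvec) (h : hist) (xo : pvec) : R :=
  \sum_(x : fvec) \sum_(r : rvec)
    p x y * piB r x * (restr F0 x == x0)%:R * (restr o x == xo)%:R
      * (consistent x h)%:R * (\prod_(t < size h)
          piSb x0 (take t h) r (Some (tnth (in_tuple h) t).1))
      * piSb x0 h r None.

Definition pc0 (x0 xo : pvec) : R :=
  Ppre x0 [::] xo / \sum_(z : pvec) Ppre z [::] xo.

(* p'(X'^t = v | X'^{<t}, A'^{<t} (= hprev, x0), A'^t = a, X_o = xo) *)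
Definition pcstep (x0 : pvec) (hprev : hist) (a : 'I_dx) (v : V) (xo : pvec) : R :=
  Ppre x0 (rcons hprev (a, v)) xo / \sum_(w : V) Ppre x0 (rcons hprev (a, w)) xo.

Definition pcprod (x0 : pvec) (h : hist) (xo : pvec) : R :=
  pc0 x0 xo * \prod_(t < size h)
     pcstep x0 (take t h) (tnth (in_tuple h) t).1 (tnth (in_tuple h) t).2 xo.

Definition pcY (y : Ylab) (x0 : pvec) (h : hist) (xo : pvec) : R :=
  PpreY y x0 h xo / \sum_(y' : Ylab) PpreY y' x0 h xo.

Definition p_o (xo : pvec) : R :=
  \sum_(x : fvec) \sum_(y : Ylab) p x y * (restr o x == xo)%:R.

Definition pRo (r : rvec) (xo : pvec) : R :=
  \sum_(x : fvec) \sum_(y : Ylab) p x y * piB r x * (restr o x == xo)%:R.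

Definition piB_cond_ge (r r' : rvec) (xo : pvec) : R :=
  (geR r r')%:R * pRo r xo / \sum_(s : rvec | geR s r') pRo s xo.

Definition piB_ge (r' : rvec) (xo : pvec) : R :=
  (\sum_(s : rvec | geR s r') pRo s xo) / p_o xo.

Definition qprime (x0 : pvec) (h : hist) (r : rvec) (xo : pvec) : R :=
  piB_cond_ge r (acquired h) xo * trajprob piA x0 h * pcprod x0 h xo * p_o xo.

Definition Jformula : R :=
  \sum_(c : Cst) \sum_(y : Ylab) \sum_(x0 : pvec) \sum_(n < N.+1)
   \sum_(h : n.-tuple ('I_dx * V)) \sum_(r : rvec) \sum_(xo : pvec)
     cv c * g x0 h y c * pcY y x0 h xo * qprime x0 h r xo.

(* ---- the same conditionals p(X'^t | X'^{<t}, A'^t, X_o) computed in the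
   full-data process (= p(X_(1),a'^t | X_(1),r'^{t-1}, X'^0, X_o)), used in
   the semi-offline positivity assumption ---- *)
Definition Pfull (x0 : pvec) (h : hist) (xo : pvec) : R :=
  \sum_(x : fvec) \sum_(y : Ylab)
    p x y * (restr F0 x == x0)%:R * (restr o x == xo)%:R * (consistent x h)%:R.

Definition pfprod (x0 : pvec) (h : hist) (xo : pvec) : R :=
  (Pfull x0 [::] xo / p_o xo) * \prod_(t < size h)
     (Pfull x0 (take t.+1 h) xo / Pfull x0 (take t h) xo).

End AFA.

(* Main.v *)
Require Import Defs.
From HB Require Import structures.
From mathcomp Require Import all_boot all_order all_algebra.
From mathcomp Require Import ring.
Import Order.TTheory GRing.Theory Num.Theory.
Local Open Scope ring_scope.

Lemma sum_ind (R : comRingType) (T : finType) (a : T) (f : T -> R) :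
  \sum_(z : T) (a == z)%:R * f z = f a.
Proof.
rewrite (bigD1 a) //= eqxx mul1r big1 ?addr0 // => z nz.
by rewrite eq_sym (negbTE nz) mul0r.
Qed.

Lemma telescope (R : fieldType) (f : nat -> R) n :
  (forall t, (t <= n)%N -> f t != 0) ->
  \prod_(t < n) (f t.+1 / f t) = f n / f 0%N.
Proof.
elim: n => [|n IH] H; first by rewrite big_ord0 divff // H.
rewrite big_ord_recr /= IH; last by move=> t ht; apply: H; apply: leqW.
have h1 := H n (leqnSn n); have h0 := H 0%N (leq0n _).
by field; apply/andP; split.
Qed.

Lemma pull_nh (R : comRingType) (I X : finType) (M : nat)
   (F : I -> forall n : nat, n.-tuple X -> R) :
  \sum_(i : I) \sum_(n < M) \sum_(h : n.-tuple X) F i n h =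
  \sum_(n < M) \sum_(h : n.-tuple X) \sum_(i : I) F i n h.
Proof.
rewrite exchange_big; apply: eq_bigr => n _; by rewrite exchange_big.
Qed.

Lemma prod_pos_each (R : numDomainType) (n : nat) (F : 'I_n -> R) :
  (forall i, 0 <= F i) -> 0 < \prod_(i < n) F i -> forall i, 0 < F i.
Proof.
move=> H P i; rewrite lt_def H andbT; apply/eqP => E.
by move: P; rewrite (bigD1 i) //= E mul0r ltxx.
Qed.

Lemma sum_pos_ge (R : numDomainType) (I : finType) (F : I -> R) (i : I) :
  (forall j, 0 <= F j) -> 0 < F i -> 0 < \sum_j F j.
Proof.
move=> H P; rewrite (bigD1 i) //=; apply: ltr_wpDr => //.
by apply: sumr_ge0 => j _.
Qed.

Lemma consistent_take (V : finType) dx (x : fvec V dx) (h : hist V dx) t :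
  consistent x h -> consistent x (take t h).
Proof.
by rewrite /consistent -{1}(cat_take_drop t h) all_cat => /andP[].
Qed.

Lemma prod_rcons (R : comRingType) (X : Type) (hh : seq X) (z : X)
   (F : seq X -> X -> R) :
  \prod_(t < size (rcons hh z)) F (take t (rcons hh z)) (tnth (in_tuple (rcons hh z)) t)
  = \prod_(t < size hh) F (take t hh) (tnth (in_tuple hh) t) * F hh z.
Proof.
rewrite (eq_bigr (fun t : 'I_(size (rcons hh z)) =>
   F (take t (rcons hh z)) (nth z (rcons hh z) t))); last by move=> t _; rewrite (tnth_nth z).
rewrite (eq_bigr (fun t : 'I_(size hh) => F (take t hh) (nth z hh t)) (P := xpredT)
   (F1 := fun t : 'I_(size hh) => F (take t hh) (tnth (in_tuple hh) t)));
  last by move=> t _; rewrite (tnth_nth z).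
rewrite size_rcons big_ord_recr /=.
rewrite -cats1 take_size_cat // nth_cat ltnn subnn /=.
congr (_ * _); apply: eq_bigr => t _.
by rewrite takel_cat ?nth_cat ?ltn_ord // ltnW.
Qed.

Lemma mul_pos (R : numDomainType) (a b : R) :
  0 <= a -> 0 <= b -> 0 < a * b -> 0 < a /\ 0 < b.
Proof.
move=> ha hb hab; rewrite !lt_def ha hb !andbT; split; apply/eqP => E;
  by move: hab; rewrite E ?mul0r ?mulr0 ltxx.
Qed.

Lemma ge0_neq0 (R : numDomainType) (a : R) : 0 <= a -> a != 0 -> 0 < a.
Proof. by move=> h n; rewrite lt_def n h. Qed.

Lemma divKK (R : fieldType) (a A B : R) : a != 0 -> a * A / (a * B) = A / B.
Proof. by move=> na; rewrite invfM mulrACA divff // mul1r. Qed.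

Theorem theorem3
  (R : realFieldType) (V Ylab Cst : finType) (dx N : nat) (o F0 : {set 'I_dx})
  (p : fvec V dx -> Ylab -> R)
  (piB : rvec dx -> fvec V dx -> R)
  (piA : pvec V dx -> hist V dx -> act dx -> R)
  (piS : pvec V dx -> hist V dx -> act dx -> R)
  (piSb : pvec V dx -> hist V dx -> rvec dx -> act dx -> R)
  (g : pvec V dx -> hist V dx -> Ylab -> Cst -> R)
  (cv : Cst -> R)
  (* (X_(1), Y) ~ p *)
  (p_ge0 : forall x y, 0 <= p x y)
  (p_sum1 : \sum_(x : fvec V dx) \sum_(y : Ylab) p x y = 1)
  (* missingness mechanism pi_beta(R | X_(1)) *)
  (piB_ge0 : forall r x, 0 <= piB r x)
  (piB_sum1 : forall x, \sum_(r : rvec dx) piB r x = 1)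
  (* X_o always observed in the retrospective data *)
  (Xo_obs : forall x y r i, 0 < p x y -> 0 < piB r x -> i \in o -> r i)
  (* MAR: pi_beta(R | X_(1)) = pi_beta(R | X_o) *)
  (MAR : forall r x x', 0 < \sum_(y : Ylab) p x y -> 0 < \sum_(y : Ylab) p x' y ->
           restr o x = restr o x' -> piB r x = piB r x')
  (* policies are conditional distributions over actions *)
  (piA_ge0 : forall x0 h a, 0 <= piA x0 h a)
  (piA_sum1 : forall x0 h, \sum_(a : act dx) piA x0 h a = 1)
  (* pi_alpha stops by the horizon N *)
  (piA_horizon : forall x0 h i, (N <= size h)%N -> piA x0 h (Some i) = 0)
  (piS_ge0 : forall x0 h a, 0 <= piS x0 h a)
  (piS_sum1 : forall x0 h, \sum_(a : act dx) piS x0 h a = 1)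
  (piSb_ge0 : forall x0 h r a, 0 <= piSb x0 h r a)
  (piSb_sum1 : forall x0 h r, \sum_(a : act dx) piSb x0 h r a = 1)
  (* blocked version of pi_sim *)
  (piSb_block : forall x0 h (r : rvec dx) i, r i = false -> piSb x0 h r (Some i) = 0)
  (piSb_pos : forall x0 h (r : rvec dx) (a : act dx), 0 < piS x0 h a ->
      (if a is Some i then r i else true) -> 0 < piSb x0 h r a)
  (* off-policy positivity of pi_sim w.r.t. pi_alpha *)
  (offpol_pos : forall x0 h a, 0 < piA x0 h a -> 0 < piS x0 h a)
  (* cost distribution g *)
  (g_ge0 : forall x0 h y c, 0 <= g x0 h y c)
  (g_sum1 : forall x0 h y, \sum_(c : Cst) g x0 h y c = 1)
  (* semi-offline positivity *)
  (semioff_pos : forall (x0 : pvec V dx) (h : hist V dx) (xo : pvec V dx),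
      0 < trajprob piA x0 h * pfprod o F0 p x0 h xo * p_o o p xo ->
      0 < piB_ge o p piB (acquired h) xo) :
  Jval N F0 p piA g cv = Epo N F0 p piB piA g cv /\
  Epo N F0 p piB piA g cv = Jformula N o F0 p piB piA piSb g cv.
Proof.
have part1 : Jval N F0 p piA g cv = Epo N F0 p piB piA g cv.
  rewrite /Jval /Epo; apply: eq_bigr => x _; apply: eq_bigr => y _.
  by rewrite -big_distrl /= -big_distrr /= piB_sum1 mulr1.
split => //; rewrite -part1.
pose Q y x0 (h : hist V dx) xo := \sum_(x : fvec V dx) p x y *
   (restr F0 x == x0)%:R * (restr o x == xo)%:R * (consistent x h)%:R.
have key : forall y x0 (h : hist V dx) xo,
  pcY o F0 p piB piSb y x0 h xo * \sum_(r : rvec dx) qprime o F0 p piB piA piSb x0 h r xo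
  = trajprob piA x0 h * Q y x0 h xo.
  move=> y x0 h xo.
  pose po := p_o o p xo.
  pose P hh := Pfull o F0 p x0 hh xo.
  pose beta r := pRo o p piB r xo / po.
  pose S hh r := \prod_(t < size hh) piSb x0 (take t hh) r (Some (tnth (in_tuple hh) t).1).
  have cons0 : forall x : fvec V dx, consistent x [::] = true by [].
  have po_ge0 : 0 <= po.
    by apply: sumr_ge0 => x _; apply: sumr_ge0 => y' _; apply: mulr_ge0 => //; apply: ler0n.
  have pRo_ge0 : forall r, 0 <= pRo o p piB r xo.
    move=> r; apply: sumr_ge0 => x _; apply: sumr_ge0 => y' _.
    by apply: mulr_ge0; [apply: mulr_ge0|apply: ler0n].
  have beta_ge0 : forall r, 0 <= beta r by move=> r; apply: divr_ge0.
  have P_ge0 : forall hh, 0 <= P hh.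
    move=> hh; apply: sumr_ge0 => x _; apply: sumr_ge0 => y' _.
    by do 3! (apply: mulr_ge0; last by apply: ler0n).
  have Q_ge0 : forall y' hh, 0 <= Q y' x0 hh xo.
    move=> y' hh; apply: sumr_ge0 => x _.
    by do 3! (apply: mulr_ge0; last by apply: ler0n).
  have S_ge0 : forall hh r, 0 <= S hh r by move=> hh r; apply: prodr_ge0.
  have QP : forall hh, \sum_(y' : Ylab) Q y' x0 hh xo = P hh.
    by move=> hh; rewrite /Q /P /Pfull exchange_big.
  have MARlem : forall x y' r, p x y' * piB r x * (restr o x == xo)%:R =
                                beta r * (p x y' * (restr o x == xo)%:R).
    move=> x y' r; case Ex: (restr o x == xo); last by rewrite !mulr0.
    rewrite !mulr1.
    have : 0 <= \sum_(y0 : Ylab) p x y0 by apply: sumr_ge0 => y0 _.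
    rewrite le_eqVlt => /orP[/eqP Z|Pos].
      by rewrite (psumr_eq0P (fun y0 _ => p_ge0 x y0) (esym Z)) // !mulr0 mul0r.
    have pRoE : pRo o p piB r xo = piB r x * po.
      rewrite /pRo /po /p_o big_distrr; apply: eq_bigr => x' _; rewrite big_distrr /=.
      apply: eq_bigr => y'' _.
      case Ex': (restr o x' == xo); last by rewrite !mulr0.
      rewrite !mulr1.
      have : 0 <= \sum_(y0 : Ylab) p x' y0 by apply: sumr_ge0 => y0 _.
      rewrite le_eqVlt => /orP[/eqP Z'|Pos'].
        by rewrite (psumr_eq0P (fun y0 _ => p_ge0 x' y0) (esym Z')) // !mulr0 !mul0r.
      rewrite (MAR r x' x Pos' Pos); last by rewrite (eqP Ex) (eqP Ex').
      by rewrite mulrC.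
    have po_pos : 0 < po.
      apply: (@sum_pos_ge _ _ _ x).
        by move=> x'; apply: sumr_ge0 => y'' _; apply: mulr_ge0 => //; apply: ler0n.
      by rewrite Ex; under eq_bigr => y'' _ do rewrite mulr1.
    by rewrite /beta pRoE mulfK ?(mulrC (p x y')) // gt_eqF.
  have MARl4 : forall x y' r (a c d : R),
      p x y' * piB r x * a * (restr o x == xo)%:R * c * d =
      beta r * d * (p x y' * a * (restr o x == xo)%:R * c).
    move=> x y' r a c d.
    transitivity ((p x y' * piB r x * (restr o x == xo)%:R) * (a * c * d)); first by ring.
    rewrite MARlem; ring.
  have MARl5 : forall x y' r (a c d e : R),
      p x y' * piB r x * a * (restr o x == xo)%:R * c * d * e =
      beta r * d * e * (p x y' * a * (restr o x == xo)%:R * c).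
    move=> x y' r a c d e.
    transitivity ((p x y' * piB r x * (restr o x == xo)%:R) * (a * c * d * e)); first by ring.
    rewrite MARlem; ring.
  have PpreE : forall hh, Ppre o F0 p piB piSb x0 hh xo = (\sum_r beta r * S hh r) * P hh.
    move=> hh; rewrite /Ppre /P /Pfull big_distrr /=; apply: eq_bigr => x _.
    rewrite big_distrr /=; apply: eq_bigr => y' _; rewrite big_distrl /=.
    by apply: eq_bigr => r _; rewrite MARl4.
  have PpreYE : forall y' hh, PpreY o F0 p piB piSb y' x0 hh xo =
      (\sum_r beta r * S hh r * piSb x0 hh r None) * Q y' x0 hh xo.
    move=> y' hh; rewrite /PpreY /Q big_distrr /=; apply: eq_bigr => x _.
    rewrite big_distrl /=; apply: eq_bigr => r _.
    by rewrite MARl5.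
  have S_rcons : forall hh z r, S (rcons hh z) r = S hh r * piSb x0 hh r (Some z.1).
    by move=> hh z r; rewrite /S (@prod_rcons _ _ hh z (fun hh a => piSb x0 hh r (Some a.1))).
  have Psum : forall hh a, \sum_(w : V) P (rcons hh (a, w)) = P hh.
    move=> hh a; rewrite /P /Pfull exchange_big; apply: eq_bigr => x _.
    rewrite exchange_big; apply: eq_bigr => y' _.
    rewrite -(@sum_ind _ _ (x a) (fun _ => p x y' * (restr F0 x == x0)%:R *
        (restr o x == xo)%:R * (consistent x hh)%:R)).
    apply: eq_bigr => w _; rewrite /consistent all_rcons /=.
    by case: (x a == w) => /=; ring.
  have P_mono : forall k, P h <= P (take k h).
    move=> k; apply: ler_sum => x _; apply: ler_sum => y' _.
    apply: ler_wpM2l; first by do 2! (apply: mulr_ge0; last by apply: ler0n).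
    case E: (consistent x h); last by apply: ler0n.
    by rewrite (@consistent_take _ _ x h k E).
  have pc0E : pc0 o F0 p piB piSb x0 xo = P [::] / po.
    have E0 : forall z, Ppre o F0 p piB piSb z [::] xo = Pfull o F0 p z [::] xo.
      move=> z; rewrite /Ppre /Pfull; apply: eq_bigr => x _; apply: eq_bigr => y' _.
      transitivity (\sum_(r : rvec dx) (p x y' * (restr F0 x == z)%:R * (restr o x == xo)%:R
         * (consistent x [::])%:R) * piB r x).
        by apply: eq_bigr => r _; rewrite big_ord0; ring.
      by rewrite -big_distrr /= piB_sum1 mulr1.
    rewrite /pc0 E0; congr (_ / _).
    under eq_bigr => z _ do rewrite E0.
    rewrite /Pfull /po /p_o exchange_big; apply: eq_bigr => x _.
    rewrite exchange_big; apply: eq_bigr => y' _.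
    rewrite -(@sum_ind _ _ (restr F0 x) (fun _ => p x y' * (restr o x == xo)%:R)).
    by apply: eq_bigr => z _; rewrite cons0 (_ : true%:R = 1 :> R) //; ring.
  have T_ge0 : 0 <= trajprob piA x0 h.
    by apply: mulr_ge0 => //; apply: prodr_ge0.
  have [HT|HT] := eqVneq (trajprob piA x0 h) 0.
    rewrite HT mul0r big1 ?mulr0 // => r _.
    by rewrite /qprime HT mulr0 !mul0r.
  have [Hpo|Hpo] := eqVneq po 0.
    rewrite big1 ?mulr0; last by move=> r _; rewrite /qprime -/po Hpo mulr0.
    have Z := psumr_eq0P (fun x _ => sumr_ge0 _ (fun y' _ => mulr_ge0 (p_ge0 x y') (ler0n _ _))) Hpo.
    rewrite /Q big1 ?mulr0 // => x _.
    have Z2 := psumr_eq0P (fun y' _ => mulr_ge0 (p_ge0 x y') (ler0n _ _)) (Z x isT).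
    transitivity ((p x y * (restr o x == xo)%:R) * ((restr F0 x == x0)%:R * (consistent x h)%:R));
      first by ring.
    by rewrite Z2 // mul0r.
  have [HP|HP] := eqVneq (P h) 0.
    have QZ : Q y x0 h xo = 0.
      exact: (psumr_eq0P (fun y' _ => Q_ge0 y' h) (etrans (QP h) HP)).
    by rewrite QZ mulr0 /pcY PpreYE QZ mulr0 !mul0r.
  have Tpos : 0 < trajprob piA x0 h by rewrite lt_def HT T_ge0.
  have popos : 0 < po by rewrite lt_def Hpo po_ge0.
  have Ppos : 0 < P h by rewrite lt_def HP P_ge0.
  have Pk_pos : forall k, 0 < P (take k h) by move=> k; exact: lt_le_trans Ppos (P_mono k).
  have pf_pos : 0 < pfprod o F0 p x0 h xo.
    rewrite /pfprod; apply: mulr_gt0.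
      by apply: divr_gt0 => //; have := Pk_pos 0%N; rewrite take0.
    by apply: prodr_gt0 => t _; apply: divr_gt0; apply: Pk_pos.
  have Hge := semioff_pos x0 h xo (mulr_gt0 (mulr_gt0 Tpos pf_pos) popos).
  set r' := acquired h in Hge *.
  set D := \sum_(s | geR s r') pRo o p piB s xo.
  have D_ge0 : 0 <= D by apply: sumr_ge0 => s _.
  have Dn0 : D != 0.
    by apply/eqP => E; move: Hge; rewrite /piB_ge -/D E mul0r ltxx.
  move: (Dn0); rewrite /D psumr_neq0; last by move=> i _; apply: pRo_ge0.
  case/hasP => s _ /andP[gs ps].
  have beta_s : 0 < beta s by apply: divr_gt0.
  have [Hpol HNone] : 0 < polprod piA x0 h /\ 0 < piA x0 h None.
    by apply: (@mul_pos _ _ _ _ _ Tpos) => //; apply: prodr_ge0 => t _.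
  have stepA : forall t : 'I_(size h), 0 < piA x0 (take t h) (Some (tnth (in_tuple h) t).1).
    exact: (@prod_pos_each _ _ (fun t : 'I_(size h) => piA x0 (take t h) (Some (tnth (in_tuple h) t).1))
              (fun t => piA_ge0 _ _ _) Hpol).
  have s_acq : forall t : 'I_(size h), s (tnth (in_tuple h) t).1.
    move=> t; move/forallP: gs => /(_ (tnth (in_tuple h) t).1) /implyP; apply.
    by rewrite /r' /acquired ffunE; apply: map_f; apply: mem_tnth.
  have stepS : forall t : 'I_(size h), 0 < piSb x0 (take t h) s (Some (tnth (in_tuple h) t).1).
    by move=> t; apply: piSb_pos; [apply: offpol_pos; apply: stepA | apply: s_acq].
  have Spos : forall k, (k <= size h)%N -> 0 < S (take k h) s.
    elim=> [|k IH] hk.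
      by rewrite take0 /S big_ord0.
    have hk' : (k < size h)%N by [].
    pose d := tnth (in_tuple h) (Ordinal hk').
    have Ed : nth d h k = tnth (in_tuple h) (Ordinal hk') by rewrite (tnth_nth d).
    rewrite (take_nth d hk') S_rcons Ed; apply: mulr_gt0; first by apply: IH; apply: ltnW.
    exact: (stepS (Ordinal hk')).
  set WN := \sum_r beta r * S h r * piSb x0 h r None.
  have WN_pos : 0 < WN.
    apply: (@sum_pos_ge _ _ _ s).
      by move=> r; apply: mulr_ge0; [apply: mulr_ge0|].
    apply: mulr_gt0; first apply: mulr_gt0 => //.
      by have := Spos (size h) (leqnn _); rewrite take_size.
    by apply: piSb_pos => //; apply: offpol_pos.
  have pcYE : pcY o F0 p piB piSb y x0 h xo = Q y x0 h xo / P h.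
    have PY : \sum_(y' : Ylab) PpreY o F0 p piB piSb y' x0 h xo = WN * P h.
      by rewrite (eq_bigr _ (fun y' _ => PpreYE y' h)) -big_distrr /= QP.
    by rewrite /pcY PY PpreYE -/WN divKK // gt_eqF.
  have condsum : \sum_r piB_cond_ge o p piB r r' xo = 1.
    rewrite /piB_cond_ge -big_distrl /=.
    rewrite (_ : \sum_r (geR r r')%:R * pRo o p piB r xo = D) ?divff //.
    by rewrite /D [RHS]big_mkcond /=; apply: eq_bigr => r _; case: geR; rewrite ?mul1r ?mul0r.
  have qsum : \sum_r qprime o F0 p piB piA piSb x0 h r xo =
      trajprob piA x0 h * (pcprod o F0 p piB piSb x0 h xo * po).
    have qE : forall r, qprime o F0 p piB piA piSb x0 h r xo = piB_cond_ge o p piB r r' xo *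
        (trajprob piA x0 h * (pcprod o F0 p piB piSb x0 h xo * po)).
      by move=> r; rewrite /qprime -/po; ring.
    by rewrite (eq_bigr _ (fun r _ => qE r)) -big_distrl /= condsum mul1r.
  have stepE : forall t : 'I_(size h),
      pcstep o F0 p piB piSb x0 (take t h) (tnth (in_tuple h) t).1 (tnth (in_tuple h) t).2 xo
      = P (take t.+1 h) / P (take t h).
    move=> t; set a := (tnth (in_tuple h) t).1.
    have Wa_pos : 0 < \sum_r beta r * S (take t h) r * piSb x0 (take t h) r (Some a).
      apply: (@sum_pos_ge _ _ _ s).
        by move=> r; apply: mulr_ge0; [apply: mulr_ge0|].
      apply: mulr_gt0; first apply: mulr_gt0 => //.
        by apply: Spos; apply: ltnW.
      exact: stepS.
    rewrite /pcstep !PpreE.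
    have WE : forall w, \sum_r beta r * S (rcons (take t h) (a, w)) r =
        \sum_r beta r * S (take t h) r * piSb x0 (take t h) r (Some a).
      by move=> w; apply: eq_bigr => r _; rewrite S_rcons mulrA.
    rewrite (WE (tnth (in_tuple h) t).2).
    rewrite (eq_bigr (fun w => (\sum_r beta r * S (take t h) r * piSb x0 (take t h) r (Some a))
       * P (rcons (take t h) (a, w)))); last by move=> w _; rewrite PpreE WE.
    rewrite -big_distrr /= Psum divKK; last by rewrite gt_eqF.
    rewrite /a -surjective_pairing.
    by rewrite (tnth_nth (tnth (in_tuple h) t)) -take_nth.
  have pcprodE : pcprod o F0 p piB piSb x0 h xo * po = P h.
    rewrite /pcprod pc0E (eq_bigr _ (fun t _ => stepE t)).
    have TT := @telescope _ (fun k => P (take k h)) (size h).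
    rewrite /= take0 take_size in TT; rewrite TT; last first.
      by move=> k _; rewrite gt_eqF // Pk_pos.
    by field; apply/andP; split; rewrite gt_eqF //; have := Pk_pos 0%N; rewrite take0.
  rewrite pcYE qsum pcprodE.
  by field; rewrite gt_eqF.
have -> : Jformula N o F0 p piB piA piSb g cv =
  \sum_(n < N.+1) \sum_(h : n.-tuple ('I_dx * V)) \sum_(c : Cst) \sum_(y : Ylab)
    \sum_(x0 : pvec V dx) \sum_(xo : pvec V dx)
     cv c * g x0 h y c * (trajprob piA x0 h * Q y x0 h xo).
  rewrite /Jformula.
  under eq_bigr => c _ do under eq_bigr => y _ do (rewrite exchange_big; under eq_bigr => n _ do rewrite exchange_big).
  under eq_bigr => c _ do (rewrite exchange_big; under eq_bigr => n _ do rewrite exchange_big).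
  rewrite exchange_big; apply: eq_bigr => n _; rewrite exchange_big; apply: eq_bigr => h _.
  apply: eq_bigr => c _; apply: eq_bigr => y _; apply: eq_bigr => x0 _.
  rewrite exchange_big; apply: eq_bigr => xo _.
  by rewrite -big_distrr /= -key mulrA.
have -> : Jval N F0 p piA g cv =
  \sum_(n < N.+1) \sum_(h : n.-tuple ('I_dx * V)) \sum_(y : Ylab) \sum_(x : fvec V dx)
    (consistent x h)%:R * p x y * trajprob piA (restr F0 x) h * expcost g cv (restr F0 x) h y.
  rewrite /Jval /trajcost.
  have -> : \sum_(x : fvec V dx) \sum_(y : Ylab) p x y * (\sum_(n < N.+1)
      \sum_(h : n.-tuple ('I_dx * V) | consistent x h)
        trajprob piA (restr F0 x) h * expcost g cv (restr F0 x) h y) =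
    \sum_(x : fvec V dx) \sum_(y : Ylab) \sum_(n < N.+1) \sum_(h : n.-tuple ('I_dx * V))
      (consistent x h)%:R * p x y * trajprob piA (restr F0 x) h * expcost g cv (restr F0 x) h y.
    apply: eq_bigr => x _; apply: eq_bigr => y _; rewrite big_distrr; apply: eq_bigr => n _.
    rewrite big_distrr big_mkcond /=; apply: eq_bigr => h _.
    by case: ifP => _; rewrite ?mul1r ?mul0r ?mulr0 ?mulrA.
  rewrite exchange_big /=.
  under eq_bigr => y _ do (rewrite exchange_big; under eq_bigr => n _ do rewrite exchange_big).
  rewrite exchange_big; apply: eq_bigr => n _; rewrite exchange_big; apply: eq_bigr => h _.
  by [].
have Qsum : forall y x0 (h : hist V dx), \sum_(xo : pvec V dx) Q y x0 h xo =
   \sum_(x : fvec V dx) p x y * (restr F0 x == x0)%:R * (consistent x h)%:R.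
  move=> y x0 h; rewrite /Q exchange_big; apply: eq_bigr => x _.
  rewrite -(@sum_ind _ _ (restr o x) (fun _ => p x y * (restr F0 x == x0)%:R * (consistent x h)%:R)).
  by apply: eq_bigr => xo _; ring.
apply: eq_bigr => n _; apply: eq_bigr => h _.
rewrite [RHS]exchange_big; apply: eq_bigr => y _.
rewrite [RHS]exchange_big.
transitivity (\sum_(x0 : pvec V dx) expcost g cv x0 h y * trajprob piA x0 h *
   \sum_(x : fvec V dx) p x y * (restr F0 x == x0)%:R * (consistent x h)%:R); last first.
  apply: eq_bigr => x0 _; rewrite -Qsum /expcost big_distrl big_distrl /=.
  apply: eq_bigr => c _; rewrite big_distrr /=.
  by apply: eq_bigr => xo _; ring.
under [RHS]eq_bigr => x0 _ do rewrite big_distrr /=.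
rewrite [RHS]exchange_big; apply: eq_bigr => x _.
rewrite -(@sum_ind _ _ (restr F0 x) (fun x0 => (consistent x h)%:R * p x y * trajprob piA x0 h * expcost g cv x0 h y)).
by apply: eq_bigr => x0 _; rewrite [(restr F0 x == x0)]eq_sym; ring.
Qed.
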